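(* Let $m,n,r,t$ be positive integers and let $E(K_n)=E_1\cup\dots\cup E_t$ be a partition of the edge set of $K_n$. Let $I$ be a random subset of $[t]$ in which each element is included independently with probability $1/r$, and suppose that \[ \mathbb{P}[\chi(\mathcal{G}_I)\ge r+1]\le \frac{1}{2m}. \] Then $g(m,n)\le r$ and $G(r)\ge\min\{m,n\}+1$.
   Context: For $I\subseteq[t]$, $\mathcal{G}_I$ is the spanning subgraph of $K_n$ with edge set $\bigcup_{i\in I}E_i$; $\chi$ is chromatic number. The grid graph $\Gamma_{m,n}$ has vertex set $[m]\times[n]$, distinct vertices $(i,j),(i',j')$ adjacent iff $i=i'$ or $j=j'$. A rectangle is the induced subgraph on $\{(i,j),(i',j),(i,j'),(i',j')\}$ with $i<i'$, $j<j'$; in an edge coloring it is alternating if $\{(i,j),(i',j)\}$ and $\{(i,j'),(i',j')\}$ share a color and $\{(i,j),(i,j')\}$ and $\{(i',j),(i',j')\}$ share a color. $g(m,n)$ is the minimum $r$ for which some $r$-coloring of the edges of $\Gamma_{m,n}$ has no alternating rectangle; $G(r)$ is the minimum $n$ such that every $r$-coloring of the edges of $\Gamma_{n,n}$ has an alternating rectangle. *)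

(* Defs.v *)
From mathcomp Require Import all_boot all_order all_algebra.
Set Implicit Arguments. Unset Strict Implicit. Unset Printing Implicit Defensive.
Import GRing.Theory Num.Theory.

(* A partition E(K_n) = E_1 u ... u E_t is encoded by a symmetric map
   c : 'I_n -> 'I_n -> 'I_t; the edge {u,v} (u != v) lies in E_(c u v).
   Values on the diagonal are irrelevant. *)

Definition GI_adj n t (c : 'I_n -> 'I_n -> 'I_t) (I : {set 'I_t}) : rel 'I_n :=
  fun u v => (u != v) && (c u v \in I).

Definition colorableb n (adj : rel 'I_n) (k : nat) : bool :=
  [exists f : {ffun 'I_n -> 'I_k},
     [forall u, [forall v, adj u v ==> (f u != f v)]]].

Lemma GI_colorable_n n t (c : 'I_n -> 'I_n -> 'I_t) (I : {set 'I_t}) :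
  exists k, colorableb (GI_adj c I) k.
Proof.
exists n; apply/existsP; exists [ffun u => u].
apply/forallP => u; apply/forallP => v; apply/implyP => /andP[h _].
by rewrite !ffunE.
Qed.

Definition chi_GI n t (c : 'I_n -> 'I_n -> 'I_t) (I : {set 'I_t}) : nat :=
  ex_minn (GI_colorable_n c I).

(* Probability that chi(G_I) >= r+1 when each i in [t] is put in I
   independently with probability 1/r. *)
Definition prob_chi_ge n t (c : 'I_n -> 'I_n -> 'I_t) (r : nat) : rat :=
  (\sum_(I : {set 'I_t} | (r.+1 <= chi_GI c I)%N)
     ((r%:R)^-1) ^+ #|I| * (1 - (r%:R)^-1) ^+ (t - #|I|)%N)%R.

(* Vertices of Gamma_{m,n} are pairs (i,j) in 'I_m * 'I_n.  An r-colouring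
   of the edges is a symmetric map col : V -> V -> 'I_r (only its values on
   edges, i.e. pairs in a common row or column, are ever used). *)

Definition alt_rect m n r (col : 'I_m * 'I_n -> 'I_m * 'I_n -> 'I_r)
    (i i' : 'I_m) (j j' : 'I_n) : bool :=
  [&& i < i', j < j',
      col (i, j) (i', j) == col (i, j') (i', j')
    & col (i, j) (i, j') == col (i', j) (i', j')].

Definition has_alt_rect m n r (col : 'I_m * 'I_n -> 'I_m * 'I_n -> 'I_r) : bool :=
  [exists i, exists i', exists j, exists j', alt_rect col i i' j j'].

Definition good_coloring_exists m n r : bool :=
  [exists col : {ffun 'I_m * 'I_n -> {ffun 'I_m * 'I_n -> 'I_r}},
     [forall u, [forall v, col u v == col v u]]
     && ~~ has_alt_rect (fun u v => col u v)].

Lemma good_coloring_exists_some m n : exists r, good_coloring_exists m n r.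
Proof.
exists #|{set 'I_m * 'I_n}|; apply/existsP.
exists [ffun u => [ffun v => enum_rank [set u; v]]].
apply/andP; split.
  by apply/forallP => u; apply/forallP => v; rewrite !ffunE setUC.
apply/existsP => -[i /existsP [i' /existsP [j /existsP [j' /and4P [lti ltj e _]]]]].
move: e; rewrite !ffunE => /eqP /enum_rank_inj e.
have : (i, j) \in [set (i, j'); (i', j')] by rewrite -e !inE eqxx.
rewrite !inE => /orP [] /andP [/eqP /= ei /eqP /= ej].
  by rewrite ej ltnn in ltj.
by rewrite ei ltnn in lti.
Qed.

Definition g m n : nat := ex_minn (good_coloring_exists_some m n).

Definition every_coloring_alt (r N : nat) : Prop :=
  forall col : 'I_N * 'I_N -> 'I_N * 'I_N -> 'I_r,
    (forall u v, col u v = col v u) -> has_alt_rect col.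

(* "G(r) >= k", where G(r) = min {N | every_coloring_alt r N}
   (a lower bound on this minimum; vacuous if the set is empty). *)
Definition G_ge (r k : nat) : Prop :=
  forall N, every_coloring_alt r N -> k <= N.

(* Main.v *)
Require Import Defs.
From mathcomp Require Import all_boot all_order all_algebra ring zify.
Import Order.TTheory GRing.Theory Num.Theory.
Set Implicit Arguments. Unset Strict Implicit.

Section CW.
Variable T : finType.
Variable adj : rel T.
Hypothesis adj_sym : symmetric adj.
Hypothesis adj_irr : irreflexive adj.

Definition deg (S : {set T}) v := #|[set u in S | adj v u]|.
Definition indep (A : {set T}) := forall x y, x \in A -> y \in A -> ~~ adj x y.

Lemma inv_anti (a b : nat) : a <= b -> ((b.+1)%:R^-1 <= ((a.+1)%:R^-1 : rat))%R.
Proof. by move=> h; rewrite lef_pV2 ?posrE ?ltr0Sn // ler_nat. Qed.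

Lemma caro_wei (S : {set T}) : exists2 A : {set T}, (A \subset S) /\ indep A &
  (\sum_(v in S) ((deg S v).+1%:R)^-1 <= (#|A|%:R : rat))%R.
Proof.
move: {2}#|S| (leqnn #|S|) => k; elim: k S => [|k IH] S hS.
  exists set0; first by split; [exact: sub0set| move=> x y; rewrite inE].
  move: hS; rewrite leqn0 cards_eq0 => /eqP ->; by rewrite big_set0 cards0.
case: (set_0Vmem S) => [->|[v0 v0S]].
  exists set0; first by split; [exact: sub0set| move=> x y; rewrite inE].
  by rewrite big_set0 cards0.
case: (arg_minnP (deg S) v0S) => v vS vmin.
have {}vS : v \in S := vS.
pose Nb := [set u in S | adj v u].
pose Nv := v |: Nb.
pose S' := S :\: Nv.
have vNb : v \notin Nb by rewrite inE adj_irr andbF.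
have NvS : Nv \subset S by rewrite subUset sub1set vS; apply/subsetP => u; rewrite inE => /andP[].
have hS' : #|S'| <= k.
  have : S' \subset S :\ v by apply: setDS; rewrite sub1set setU11.
  move/subset_leq_card; move: hS; rewrite (cardsD1 v S) vS add1n ltnS.
  by move=> h1 h2; exact: leq_trans h2 h1.
have [A' [A'S' indA'] leA'] := IH S' hS'.
have vA' : v \notin A'.
  apply/negP => /(subsetP A'S'); by rewrite inE setU11.
exists (v |: A').
  split.
    rewrite subUset sub1set vS; apply: subset_trans A'S' _; exact: subsetDl.
  have key : forall y, y \in A' -> ~~ adj v y.
    move=> y /(subsetP A'S'); rewrite !inE negb_or => /andP[/andP[_ hy] yS].
    by move: hy; rewrite yS.
  move=> x y; rewrite !inE => /orP[/eqP->|xA] /orP[/eqP->|yA].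
  - by rewrite adj_irr.
  - exact: key.
  - by rewrite adj_sym; exact: key.
  - exact: indA'.
rewrite cardsU1 vA' add1n -addn1 natrD addrC.
rewrite (bigID (mem Nv)) /=; apply: lerD.
  have -> : (\sum_(i in S | i \in Nv) ((deg S i).+1%:R)^-1 =
      \sum_(i in Nv) ((deg S i).+1%:R : rat)^-1)%R.
    apply: eq_bigl => i; case iN: (i \in Nv); last by rewrite andbF.
    by rewrite andbT (subsetP NvS).
  apply: le_trans (_ : \sum_(i in Nv) ((deg S v).+1%:R : rat)^-1 <= 1)%R.
    apply: ler_sum => i iN; apply: inv_anti; apply: vmin; exact: (subsetP NvS).
  rewrite sumr_const /Nv cardsU1 vNb add1n.
  rewrite (_ : #|Nb| = deg S v) // -[X in (X <= _)%R]mulr_natr mulVf //.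
  by rewrite pnatr_eq0.
apply: le_trans leA'.
have -> : (\sum_(i in S | i \notin Nv) ((deg S i).+1%:R)^-1 =
    \sum_(i in S') ((deg S i).+1%:R : rat)^-1)%R.
  by apply: eq_bigl => i; rewrite !inE andbC.
apply: ler_sum => i _; apply: inv_anti; apply: subset_leq_card.
apply/subsetP => u; rewrite !inE => /andP[/andP[_ h1] h2]; by rewrite h1 h2.
Qed.
End CW.

Section Main.
Variables (n t r : nat) (c : 'I_n -> 'I_n -> 'I_t).
Hypothesis hc : forall u v, c u v = c v u.
Hypothesis hr : 0 < r.

Definition F := {ffun 'I_t -> 'I_r}.
Definition agree (h h' : F) : {set 'I_t} := [set e | h e == h' e].
Definition badI (I : {set 'I_t}) := r.+1 <= chi_GI c I.
Definition bad h h' := badI (agree h h').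

Lemma agreeC h h' : agree h h' = agree h' h.
Proof. by apply/setP => e; rewrite !inE eq_sym. Qed.

Lemma card_agree h I : #|[set h' : F | agree h h' == I]| = r.-1 ^ (t - #|I|).
Proof.
pose Fm (e : 'I_t) : pred 'I_r := if e \in I then pred1 (h e) else predC1 (h e).
have -> : [set h' : F | agree h h' == I] = [set h' in family Fm].
  apply/setP => h'; rewrite !inE; apply/eqP/familyP.
    move=> hI e; rewrite /Fm -hI inE /=; case: (eqVneq (h e) (h' e)) => [->|ne]; rewrite !inE ?eqxx // eq_sym ne //.
  move=> hf; apply/setP => e; rewrite inE; have := hf e; rewrite /Fm /= eq_sym.
  by case: (e \in I); rewrite inE /=; [move=> -> | move/negbTE].
rewrite cardsE card_family foldrE big_map big_enum /=.
rewrite (bigID (mem I)) /= big1; last by move=> e eI; rewrite /Fm eI card1.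
rewrite mul1n (eq_bigr (fun _ => r.-1)); last first.
  by move=> e eI; rewrite /Fm (negbTE eI) cardC1 card_ord.
rewrite prod_nat_const; congr (_ ^ _).
have hC := cardC I; rewrite card_ord in hC.
transitivity #|[predC I]|; first by apply: eq_card => i; rewrite !inE.
by rewrite -(addKn #|I| #|[predC I]|) hC.
Qed.

Definition Kn := \sum_(I | badI I) r.-1 ^ (t - #|I|).

Lemma count_bad h : #|[set h' | bad h h']| = Kn.
Proof.
rewrite -sum1_card (partition_big (agree h) badI) //.
apply: eq_bigr => I bI; rewrite -(card_agree h) -sum1_card; apply: eq_bigl => h'.
rewrite !inE; case: eqP => [hI|_]; [by rewrite /bad hI bI | by rewrite andbF].
by move=> h'; rewrite inE.
Qed.

Lemma prob_eq : prob_chi_ge c r = (Kn%:R / (r ^ t)%:R)%R.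
Proof.
rewrite /prob_chi_ge /Kn natr_sum mulr_suml; apply: eq_bigr => I _.
have hI := max_card (mem I); rewrite card_ord in hI.
have tE : r ^ t = r ^ #|I| * r ^ (t - #|I|) by rewrite -expnD subnKC.
rewrite tE natrM !natrX.
have rE : (r%:R = r.-1%:R + 1 :> rat)%R by rewrite natr1 prednK.
have h0 : (r.-1%:R + 1 : rat)%R != 0%R by rewrite -rE pnatr_eq0 -lt0n.
rewrite rE.
have h1 : (1 - (r.-1%:R + 1)^-1 = r.-1%:R / (r.-1%:R + 1) :> rat)%R.
  by field.
rewrite h1 exprMn !exprVn invfM mulrCA mulrA //.
Qed.


Lemma colorable_n I : colorableb (GI_adj c I) n.
Proof.
apply/existsP; exists [ffun u => u].
apply/forallP => u; apply/forallP => v; apply/implyP => /andP[h _].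
by rewrite !ffunE.
Qed.

Lemma chi_le_n I : chi_GI c I <= n.
Proof.
rewrite /chi_GI; case: ex_minnP => k _ hk; apply: hk; exact: colorable_n.
Qed.

Lemma colorable_ge k : colorableb (GI_adj c setT) k -> n <= k.
Proof.
case/existsP => f /forallP hf.
have inj : injective f.
  move=> u v fuv; apply/eqP; apply/negPn/negP => uv.
  have := hf u => /forallP /(_ v) /implyP; rewrite /GI_adj uv inE fuv eqxx.
  by move=> /(_ isT).
by have := leq_card _ inj; rewrite !card_ord.
Qed.

Lemma chi_setT : n <= chi_GI c setT.
Proof. rewrite /chi_GI; case: ex_minnP => k hk _; exact: colorable_ge. Qed.

Lemma colorable_chi I : ~~ badI I -> colorableb (GI_adj c I) r.
Proof.
rewrite /badI -leqNgt /chi_GI; case: ex_minnP => k /existsP [f /forallP hf] _ kr.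
apply/existsP; exists [ffun u => widen_ord kr (f u)].
apply/forallP => u; apply/forallP => v; apply/implyP => a.
rewrite !ffunE; have := hf u => /forallP /(_ v) /implyP /(_ a).
by apply: contra => /eqP [] e; apply/eqP/val_inj.
Qed.

Definition r0 : 'I_r := Ordinal hr.

Definition phi (I : {set 'I_t}) : {ffun 'I_n -> 'I_r} :=
  odflt [ffun _ => r0] [pick f : {ffun 'I_n -> 'I_r} |
     [forall u, [forall v, GI_adj c I u v ==> (f u != f v)]]].

Lemma phiP I u v : ~~ badI I -> GI_adj c I u v -> phi I u != phi I v.
Proof.
move=> nb a; have /existsP [f0 hf0] := colorable_chi nb; rewrite /phi.
case: pickP => [f /forallP hf /= | /(_ f0)]; last by rewrite hf0.
have := hf u => /forallP /(_ v) /implyP; exact.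
Qed.


Section Constr.
Variable m : nat.
Variable H : 'I_m -> F.
Hypothesis hH : forall i i', i != i' -> ~~ bad (H i) (H i').

Definition colf (u v : 'I_m * 'I_n) : 'I_r :=
  if u.1 == v.1 then H u.1 (c u.2 v.2)
  else if u.2 == v.2 then phi (agree (H u.1) (H v.1)) u.2 else r0.

Lemma colf_sym u v : colf u v = colf v u.
Proof.
case: u v => [i j] [i' j']; rewrite /colf /=.
case: (eqVneq i i') => [<-|ne]; first by rewrite hc.
case: (eqVneq j j') => [<-|ne2] //; by rewrite agreeC.
Qed.

Lemma colf_noalt i i' j j' : ~~ alt_rect colf i i' j j'.
Proof.
apply/negP => /and4P [lti ltj e1 e2].
have ne : i != i' by rewrite neq_ltn lti.
have nej : j != j' by rewrite neq_ltn ltj.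
move: e1 e2; rewrite /colf /= eqxx (negbTE ne) !eqxx => e1 /eqP e2.
have a : GI_adj c (agree (H i) (H i')) j j' by rewrite /GI_adj nej inE e2 eqxx.
by move: (phiP (hH ne) a); rewrite e1.
Qed.

Lemma good_exists : good_coloring_exists m n r.
Proof.
apply/existsP; exists [ffun u => [ffun v => colf u v]]; apply/andP; split.
  by apply/forallP => u; apply/forallP => v; rewrite !ffunE colf_sym.
apply/negP => /existsP [i /existsP [i' /existsP [j /existsP [j' h]]]].
by move: (colf_noalt i i' j j'); rewrite /alt_rect !ffunE in h *; rewrite h.
Qed.

Lemma G_part : G_ge r (minn m n).+1.
Proof.
move=> N hN; rewrite ltnNge; apply/negP => hle.
have hm : N <= m by apply: leq_trans hle (geq_minl _ _).
have hn : N <= n by apply: leq_trans hle (geq_minr _ _).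
pose col' (u v : 'I_N * 'I_N) :=
  colf (widen_ord hm u.1, widen_ord hn u.2) (widen_ord hm v.1, widen_ord hn v.2).
have /existsP [i /existsP [i' /existsP [j /existsP [j' h]]]] :
  has_alt_rect col' by apply: hN => u v; rewrite /col' colf_sym.
by move: (colf_noalt (widen_ord hm i) (widen_ord hm i') (widen_ord hn j) (widen_ord hn j')) => /negP; apply.
Qed.
End Constr.

End Main.

Theorem lemma3p2 (m n r t : nat) (hm : 0 < m) (hn : 0 < n) (hr : 0 < r) (ht : 0 < t)
    (c : 'I_n -> 'I_n -> 'I_t) (hc : forall u v, c u v = c v u) :
  (prob_chi_ge c r <= ((2 * m)%:R)^-1)%R ->
  g m n <= r /\ G_ge r (minn m n).+1.
Proof.
move=> hp.
suff [H hH] : exists H : 'I_m -> F t r, forall i i', i != i' -> ~~ bad c (H i) (H i').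
  split; last exact: G_part hc hr _ _ hH.
  rewrite /g; case: ex_minnP => k _ hk; apply: hk; exact: good_exists hc hr _ _ hH.
pose h0 : F t r := [ffun _ => r0 hr].
have [nr|rn] := leqP n r.
  exists (fun _ => h0) => i i' _; rewrite /bad /badI -ltnNge ltnS.
  exact: leq_trans (chi_le_n _ _) nr.
rewrite prob_eq // in hp.
have Rpos : 0 < r ^ t by rewrite expn_gt0 hr.
have hK : Kn r c * (2 * m) <= r ^ t.
  rewrite -(ler_nat rat) natrM.
  have R0 : (0 < (r ^ t)%:R :> rat)%R by rewrite ltr0n.
  by move: hp; rewrite ler_pdivrMr // [X in (_ <= X)%R]mulrC ler_pdivlMr // ltr0n muln_gt0 hm.
pose adj := fun h h' : F t r => (h != h') && bad c h h'.
have adj_sym : symmetric adj by move=> x y; rewrite /adj eq_sym /bad agreeC.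
have adj_irr : irreflexive adj by move=> x; rewrite /adj eqxx.
have [A [_ indA] hA] := caro_wei adj_sym adj_irr [set: F t r].
have badd : forall h : F t r, bad c h h.
  move=> h; rewrite /bad /badI (_ : agree h h = setT); last by apply/setP => e; rewrite !inE eqxx.
  exact: leq_trans rn (chi_setT _).
have degE : forall h, (deg adj [set: F t r] h).+1 = Kn r c.
  move=> h; rewrite -(count_bad c h) (_ : [set h' | bad c h h'] = h |: [set u in [set: F t r] | adj h u]).
    by rewrite cardsU1 !inE adj_irr.
  apply/setP => u; rewrite !inE /adj; case: (eqVneq u h) => [->|_] /=; by rewrite ?badd.
have Kpos : 0 < Kn r c by rewrite -(degE h0).
move: hA; rewrite (eq_bigr (fun _ => (Kn r c)%:R^-1)%R); last by move=> h _; rewrite degE.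
rewrite sumr_const cardsT card_ffun !card_ord -[X in (X <= _)%R]mulr_natr mulrC.
rewrite ler_pdivrMr ?ltr0n // -natrM ler_nat => hA.
have h2m : 2 * m <= #|A|.
  by rewrite -(leq_pmul2r Kpos); apply: leq_trans hA; rewrite mulnC.
exists (fun i => nth h0 (enum A) i) => i i' ne.
have si : i < size (enum A) by rewrite -cardE; apply: leq_trans (ltn_ord i) _; lia.
have si' : i' < size (enum A) by rewrite -cardE; apply: leq_trans (ltn_ord i') _; lia.
have m1 : nth h0 (enum A) i \in A by rewrite -mem_enum mem_nth.
have m2 : nth h0 (enum A) i' \in A by rewrite -mem_enum mem_nth.
have := indA _ _ m1 m2; rewrite /adj.
by rewrite nth_uniq ?enum_uniq // ne.
Qed.
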